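(* Let $f\in C([0,1],\mathbb R)\cap C^2([0,1),\mathbb R)$, $R\in C([0,1],\mathbb R)\cap C^1([0,1),\mathbb R)$ and $\epsilon>0$, and assume that for all $w\in[0,1)$ $$f'(w)=(1-w)^{\epsilon-1}R(w),\qquad R'(w)>0.$$ Then $$\lim_{w\to1^-}\frac{f(1)-f(w)}{(1-w)^\epsilon}=\frac{R(1)}{\epsilon},\qquad \frac{d}{dw}\,\frac{f(1)-f(w)}{(1-w)^\epsilon}>0\quad\text{for all }w\in[0,1),$$ and consequently $$f(1)-f(0)<\frac{f(1)-f(w)}{(1-w)^\epsilon}<\frac{R(1)}{\epsilon}\qquad\text{for all }w\in(0,1).$$ *)

(* Defs.v *)
From Stdlib Require Import Reals.
From Coquelicot Require Import Coquelicot.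
Open Scope R_scope.

Definition I01c (x : R) : Prop := 0 <= x <= 1.
Definition I01o (x : R) : Prop := 0 <= x < 1.

Definition cont_on (D : R -> Prop) (f : R -> R) : Prop :=
  forall x, D x -> filterlim f (within D (locally x)) (locally (f x)).

Definition is_derive_on (D : R -> Prop) (f : R -> R) (x l : R) : Prop :=
  filterlim (fun y => (f y - f x) / (y - x))
    (within (fun y => D y /\ y <> x) (locally x)) (locally l).

Definition C1_on (D : R -> Prop) (f f1 : R -> R) : Prop :=
  (forall x, D x -> is_derive_on D f x (f1 x)) /\ cont_on D f1.

Definition C2_on (D : R -> Prop) (f f1 f2 : R -> R) : Prop :=
  (forall x, D x -> is_derive_on D f x (f1 x)) /\
  (forall x, D x -> is_derive_on D f1 x (f2 x)) /\ cont_on D f2.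

(* Main.v *)
Require Import Defs.
From Stdlib Require Import Reals Lra.
From Coquelicot Require Import Coquelicot.
Open Scope R_scope.
Lemma ballR (x e y : R) : ball x e y <-> Rabs (y - x) < e.
Proof. split; intro H; exact H. Qed.

Lemma L0' (D : R -> Prop) h x l : is_derive h x l -> is_derive_on D h x l.
Proof.
  intro Hd. apply is_derive_Reals in Hd.
  unfold is_derive_on. apply filterlim_locally. intros eps.
  destruct (Hd eps (cond_pos eps)) as [d Hdd].
  exists d. intros y Hy [_ Hyx]. apply ballR. apply ballR in Hy.
  replace y with (x + (y - x)) by ring.
  replace (x + (y - x) - x) with (y - x) by ring.
  apply Hdd; [lra|exact Hy].
Qed.

Lemma L0 h x l : 0 < x < 1 -> is_derive_on I01o h x l -> is_derive h x l.
Proof.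
  intros Hx Hd. apply is_derive_Reals. intros eps Heps.
  apply (proj1 (filterlim_locally _ _)) with (eps := mkposreal eps Heps) in Hd.
  destruct Hd as [d Hdd].
  assert (Hp : 0 < Rmin d (Rmin x (1 - x))).
  { destruct d as [d dp]; simpl. repeat apply Rmin_pos; lra. }
  exists (mkposreal _ Hp). intros hh Hh0 Hh. simpl in Hh.
  assert (H1 := Rmin_l d (Rmin x (1 - x))).
  assert (H2 := Rmin_r d (Rmin x (1 - x))).
  assert (H3 := Rmin_l x (1 - x)). assert (H4 := Rmin_r x (1 - x)).
  assert (Hb : Rabs hh < x /\ Rabs hh < 1 - x) by lra.
  destruct Hb as [Hb1 Hb2].
  apply Rabs_def2 in Hb1. apply Rabs_def2 in Hb2.
  assert (HH := Hdd (x + hh)).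
  replace (x + hh - x) with hh in HH by ring.
  apply HH.
  - apply ballR. replace (x + hh - x) with hh by ring. lra.
  - split; [unfold I01o; lra|]. intro E. apply Hh0. lra.
Qed.
Section Lims.
Context {T : Type} {F : (T -> Prop) -> Prop} {FF : Filter F}.
Lemma lim_mult (f g : T -> R) a b : filterlim f F (locally a) -> filterlim g F (locally b) ->
  filterlim (fun y => f y * g y) F (locally (a * b)).
Proof. intros Hf Hg. eapply filterlim_comp_2; [exact Hf|exact Hg|]. apply (filterlim_mult a b). Qed.
Lemma lim_plus (f g : T -> R) a b : filterlim f F (locally a) -> filterlim g F (locally b) ->
  filterlim (fun y => f y + g y) F (locally (a + b)).
Proof. intros Hf Hg. eapply filterlim_comp_2; [exact Hf|exact Hg|]. apply (filterlim_plus a b). Qed.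
Lemma lim_opp (f : T -> R) a : filterlim f F (locally a) ->
  filterlim (fun y => - f y) F (locally (- a)).
Proof. intros Hf. eapply filterlim_comp; [exact Hf|]. apply (filterlim_opp a). Qed.
Lemma lim_inv (f : T -> R) a : a <> 0 -> filterlim f F (locally a) ->
  filterlim (fun y => / f y) F (locally (/ a)).
Proof. intros Ha Hf. eapply filterlim_comp; [exact Hf|].
  apply (filterlim_Rbar_inv (Finite a)). intro E. apply Ha. injection E; auto. Qed.
End Lims.
Lemma lim_le_const F {FF : ProperFilter' F} (f : R -> R) l c :
  F (fun x => f x <= c) -> filterlim f F (locally l) -> l <= c.
Proof.
  intros H Hl. assert (Hc : filterlim (fun _ : R => c) F (Rbar_locally (Finite c))) by apply filterlim_const.
  exact (filterlim_le (F:=F) f (fun _ => c) l c H Hl Hc).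
Qed.
Lemma lim_ge_const F {FF : ProperFilter' F} (f : R -> R) l c :
  F (fun x => c <= f x) -> filterlim f F (locally l) -> c <= l.
Proof.
  intros H Hl. assert (Hc : filterlim (fun _ : R => c) F (Rbar_locally (Finite c))) by apply filterlim_const.
  exact (filterlim_le (F:=F) (fun _ => c) f c l H Hc Hl).
Qed.

Lemma endp h L : (forall a b, 0 <= a < b -> b < 1 -> h a < h b) ->
  filterlim h (at_left 1) (locally L) -> forall w, 0 <= w < 1 -> h w < L.
Proof.
  intros Hm Hl w Hw.
  assert (h ((w+1)/2) <= L).
  { apply (lim_ge_const (at_left 1) h); [|exact Hl].
    assert (Hp2 : 0 < (1 - w) / 2) by lra.
    exists (mkposreal _ Hp2). intros y Hy Hy0. assert (Hy' : Rabs (y - 1) < (1-w)/2) by exact Hy.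
    apply Rabs_def2 in Hy'. destruct Hy'. apply Rlt_le. apply Hm; lra. }
  assert (h w < h ((w+1)/2)) by (apply Hm; lra). lra.
Qed.

Lemma cont_left g : cont_on I01c g -> filterlim g (at_left 1) (locally (g 1)).
Proof.
  intros Hc. specialize (Hc 1 ltac:(unfold I01c; lra)).
  eapply filterlim_filter_le_1; [|exact Hc].
  intros P [d Hd]. assert (Hp : 0 < Rmin d 1) by (destruct d; apply Rmin_pos; simpl; lra).
  exists (mkposreal _ Hp). intros y Hy Hy1. assert (Hy' : Rabs (y - 1) < Rmin d 1) by exact Hy.
  assert (H1 := Rmin_l d 1). assert (H2 := Rmin_r d 1).
  apply Rabs_def2 in Hy'. destruct Hy'.
  apply Hd. - assert (Rabs (y - 1) < d) by (apply Rabs_def1; lra). exact H3.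
  - unfold I01c; lra.
Qed.

Lemma cont_right g : cont_on I01c g -> filterlim g (at_right 0) (locally (g 0)).
Proof.
  intros Hc. specialize (Hc 0 ltac:(unfold I01c; lra)).
  eapply filterlim_filter_le_1; [|exact Hc].
  intros P [d Hd]. assert (Hp : 0 < Rmin d 1) by (destruct d; apply Rmin_pos; simpl; lra).
  exists (mkposreal _ Hp). intros y Hy Hy1. assert (Hy' : Rabs (y - 0) < Rmin d 1) by exact Hy.
  assert (H1 := Rmin_l d 1). assert (H2 := Rmin_r d 1).
  apply Rabs_def2 in Hy'. destruct Hy'.
  apply Hd. - assert (Rabs (y - 0) < d) by (apply Rabs_def1; lra). exact H3.
  - unfold I01c; lra.
Qed.

Lemma P_deriv e x : x < 1 -> is_derive (fun w => Rpower (1 - w) e) x (- e * Rpower (1 - x) (e - 1)).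
Proof.
  intros Hx. unfold Rpower. auto_derive; [lra|].
  replace ((e - 1) * ln (1 - x)) with (e * ln (1 - x) + - ln (1 - x)) by ring.
  rewrite exp_plus, exp_Ropp, exp_ln by lra. replace (1 + - x) with (1 - x) by ring. field. lra.
Qed.

Lemma P_pos e x : 0 < Rpower x e.
Proof. unfold Rpower. apply exp_pos. Qed.

Lemma P_1 e : Rpower (1 - 0) e = 1.
Proof. unfold Rpower. replace (1 - 0) with 1 by ring. rewrite ln_1, Rmult_0_r. apply exp_0. Qed.

Lemma P_lim e : 0 < e -> filterlim (fun w => Rpower (1 - w) e) (at_left 1) (locally 0).
Proof.
  intros He. apply filterlim_locally. intros eps.
  assert (Hd : 0 < Rpower eps (/ e)) by apply P_pos.
  exists (mkposreal _ Hd). intros y Hy Hy1. assert (Hy' : Rabs (y - 1) < Rpower eps (/ e)) by exact Hy.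
  apply Rabs_def2 in Hy'. destruct Hy'.
  change (Rabs (Rpower (1 - y) e - 0) < eps).
  rewrite Rminus_0_r, Rabs_pos_eq by (left; apply P_pos).
  apply Rlt_le_trans with (Rpower (Rpower eps (/ e)) e).
  - apply Rlt_Rpower_l; lra.
  - rewrite Rpower_mult, Rinv_l by lra. rewrite Rpower_1 by (destruct eps; simpl; lra). lra.
Qed.
Lemma mono_int h dh a b : (forall x, a <= x <= b -> is_derive h x (dh x)) ->
  (forall x, a <= x <= b -> dh x > 0) -> a < b -> h a < h b.
Proof.
  intros Hd Hp Hab.
  destruct (MVT_gen h a b dh) as [c [Hc E]].
  - intros x Hx. rewrite Rmin_left in Hx by lra. rewrite Rmax_right in Hx by lra. apply Hd; lra.
  - intros x Hx. rewrite Rmin_left in Hx by lra. rewrite Rmax_right in Hx by lra.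
    apply continuity_pt_filterlim. apply (ex_derive_continuous h). eexists. apply Hd; lra.
  - rewrite Rmin_left in Hc by lra. rewrite Rmax_right in Hc by lra.
    assert (dh c > 0) by (apply Hp; lra). assert (dh c * (b - a) > 0) by (apply Rmult_lt_0_compat; lra). lra.
Qed.

Lemma mono h dh : (forall x, 0 < x < 1 -> is_derive h x (dh x)) ->
  (forall x, 0 < x < 1 -> dh x > 0) -> filterlim h (at_right 0) (locally (h 0)) ->
  forall a b, 0 <= a < b -> b < 1 -> h a < h b.
Proof.
  intros Hd Hp Hc a b Hab Hb.
  assert (K : forall a b, 0 < a < b -> b < 1 -> h a < h b).
  { intros a' b' H1 H2. apply (mono_int h dh).
    - intros x Hx; apply Hd; lra.
    - intros x Hx; apply Hp; lra.
    - lra. }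
  destruct (Req_dec a 0) as [->|Ha]; [|apply K; lra].
  assert (h 0 <= h (b/2)).
  { apply (lim_le_const (at_right 0) h); [|exact Hc].
    assert (Hp2 : 0 < b / 2) by lra.
    exists (mkposreal _ Hp2). intros y Hy Hy0. assert (Hy' : Rabs (y - 0) < b/2) by exact Hy.
    apply Rabs_def2 in Hy'. destruct Hy'. apply Rlt_le. apply K; lra. }
  assert (h (b/2) < h b) by (apply K; lra). lra.
Qed.

Lemma exp_m1 e x : x < 1 -> exp ((e - 1) * ln (1 - x)) = exp (e * ln (1 - x)) / (1 - x).
Proof.
  intros Hx. replace ((e - 1) * ln (1 - x)) with (e * ln (1 - x) + - ln (1 - x)) by ring.
  rewrite exp_plus, exp_Ropp, exp_ln by lra. reflexivity.
Qed.

Lemma lim_eq {T} (F : (T -> Prop) -> Prop) (g : T -> R) a b :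
  filterlim g F (locally a) -> a = b -> filterlim g F (locally b).
Proof. intros H <-; exact H. Qed.

Theorem lemma5p1 (f R0 : R -> R) (eps : R) :
  cont_on I01c f ->
  (exists f1 f2, C2_on I01o f f1 f2) ->
  cont_on I01c R0 ->
  forall R1 : R -> R, C1_on I01o R0 R1 ->
  0 < eps ->
  (forall w, I01o w -> is_derive_on I01o f w (Rpower (1 - w) (eps - 1) * R0 w)) ->
  (forall w, I01o w -> R1 w > 0) ->
  filterlim (fun w => (f 1 - f w) / Rpower (1 - w) eps) (at_left 1)
    (locally (R0 1 / eps)) /\
  (forall w, I01o w -> exists d, d > 0 /\
     is_derive_on I01o (fun v => (f 1 - f v) / Rpower (1 - v) eps) w d) /\
  (forall w, 0 < w < 1 ->
     f 1 - f 0 < (f 1 - f w) / Rpower (1 - w) eps < R0 1 / eps).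
Proof.
  intros Hfc _ HRc R1 [HR1 _] He Hfd HR1p.
  pose (P := fun w => Rpower (1 - w) eps).
  pose (P1 := fun w => Rpower (1 - w) (eps - 1)).
  assert (HfD : forall x, 0 < x < 1 -> is_derive f x (P1 x * R0 x)).
  { intros x Hx. apply L0; [exact Hx|]. apply Hfd. unfold I01o; lra. }
  assert (HRD : forall x, 0 < x < 1 -> is_derive R0 x (R1 x)).
  { intros x Hx. apply L0; [exact Hx|]. apply HR1. unfold I01o; lra. }
  assert (HPD : forall x, x < 1 -> is_derive P x (- eps * P1 x)) by (intros; apply P_deriv; lra).
  assert (HPc : forall x, x < 1 -> filterlim P (locally x) (locally (P x))).
  { intros x Hx. apply (ex_derive_continuous P). eexists. apply HPD; exact Hx. }
  assert (HP0 : filterlim P (at_right 0) (locally (P 0))).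
  { eapply filterlim_filter_le_1; [apply filter_le_within|apply HPc; lra]. }
  assert (Hf0 := cont_right f Hfc). assert (Hf1 := cont_left f Hfc).
  assert (HR0 := cont_right R0 HRc). assert (HR1' := cont_left R0 HRc).
  assert (HPl := P_lim eps He). fold P in HPl.
  assert (HPp : forall x, 0 < P x) by (intros; apply P_pos).
  assert (HP1p : forall x, 0 < P1 x) by (intros; apply P_pos).
  assert (HRm : forall a b, 0 <= a < b -> b < 1 -> R0 a < R0 b).
  { apply (mono R0 R1); [exact HRD| |exact HR0]. intros x Hx. apply HR1p. unfold I01o; lra. }
  assert (HA : forall w, 0 <= w < 1 -> R0 w < R0 1) by (apply endp; assumption).
  pose (h := fun w => f 1 - f w - R0 1 * P w / eps).
  assert (HhD : forall x, 0 < x < 1 -> is_derive h x (P1 x * (R0 1 - R0 x))).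
  { intros x Hx. unfold h.
    unfold P, P1, Rpower. auto_derive.
    - split; [eexists; apply HfD; exact Hx|split; [lra|exact I]].
    - set (DD := Derive _ x). assert (E : DD = P1 x * R0 x) by (unfold DD; apply is_derive_unique; apply HfD; exact Hx). rewrite E.
      unfold P1, Rpower. rewrite exp_m1 by lra. replace (1 + - x) with (1 - x) by ring.
      field. lra.
  }
  assert (Hh0 : filterlim h (at_right 0) (locally (h 0))).
  { unfold h. change (filterlim (fun w => (f 1 + - f w) + - (R0 1 * P w * / eps)) (at_right 0) (locally ((f 1 + - f 0) + - (R0 1 * P 0 * / eps)))).
    apply lim_plus; [apply lim_plus; [apply filterlim_const|apply lim_opp, Hf0]|apply lim_opp; apply lim_mult; [apply lim_mult; [apply filterlim_const|exact HP0]|apply filterlim_const]]. }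
  assert (Hhm : forall a b, 0 <= a < b -> b < 1 -> h a < h b).
  { apply (mono h _ HhD); [|exact Hh0]. intros x Hx. apply Rmult_lt_0_compat; [apply HP1p|]. assert (R0 x < R0 1) by (apply HA; lra). lra. }
  assert (Hh1 : filterlim h (at_left 1) (locally 0)).
  { assert (E : (f 1 + - f 1) + - (R0 1 * 0 * / eps) = 0) by ring.
    apply (fun H => lim_eq _ _ _ _ H E).
    unfold h. change (filterlim (fun w => (f 1 + - f w) + - (R0 1 * P w * / eps)) (at_left 1) (locally ((f 1 + - f 1) + - (R0 1 * 0 * / eps)))).
    apply lim_plus; [apply lim_plus; [apply filterlim_const|apply lim_opp, Hf1]|apply lim_opp; apply lim_mult; [apply lim_mult; [apply filterlim_const|exact HPl]|apply filterlim_const]]. }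
  assert (Hhn := endp h 0 Hhm Hh1).
  pose (nk := fun w => P w * R0 w - eps * (f 1 - f w)).
  assert (HkD : forall x, 0 < x < 1 -> is_derive nk x (P x * R1 x)).
  { intros x Hx. unfold nk, P, Rpower. auto_derive.
    - split; [lra|split; [eexists; apply HRD; exact Hx|split; [eexists; apply HfD; exact Hx|exact I]]].
    - set (DR := Derive _ x). assert (E2 : DR = R1 x) by (unfold DR; apply is_derive_unique; apply HRD; exact Hx). rewrite E2.
      set (DD := Derive _ x). assert (E : DD = P1 x * R0 x) by (unfold DD; apply is_derive_unique; apply HfD; exact Hx). rewrite E.
      unfold P1, Rpower. rewrite exp_m1 by lra. replace (1 + - x) with (1 - x) by ring.
      field. lra. }
  assert (Hk0 : filterlim nk (at_right 0) (locally (nk 0))).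
  { unfold nk. change (filterlim (fun w => P w * R0 w + - (eps * (f 1 + - f w))) (at_right 0) (locally (P 0 * R0 0 + - (eps * (f 1 + - f 0))))).
    apply lim_plus; [apply lim_mult; assumption|apply lim_opp; apply lim_mult; [apply filterlim_const|apply lim_plus; [apply filterlim_const|apply lim_opp, Hf0]]]. }
  assert (Hkm : forall a b, 0 <= a < b -> b < 1 -> nk a < nk b).
  { apply (mono nk _ HkD); [|exact Hk0]. intros x Hx. apply Rmult_lt_0_compat; [apply HPp|]. apply HR1p. unfold I01o; lra. }
  assert (Hk1 : filterlim nk (at_left 1) (locally 0)).
  { assert (E : 0 * R0 1 + - (eps * (f 1 + - f 1)) = 0) by ring.
    apply (fun H => lim_eq _ _ _ _ H E).
    unfold nk. change (filterlim (fun w => P w * R0 w + - (eps * (f 1 + - f w))) (at_left 1) (locally (0 * R0 1 + - (eps * (f 1 + - f 1))))).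
    apply lim_plus; [apply lim_mult; assumption|apply lim_opp; apply lim_mult; [apply filterlim_const|apply lim_plus; [apply filterlim_const|apply lim_opp, Hf1]]]. }
  assert (Hkn := endp nk 0 Hkm Hk1).
  pose (g := fun w => (f 1 - f w) / P w).
  pose (dg := fun w => (- (P1 w * R0 w) * P w - (f 1 - f w) * (- eps * P1 w)) * / (P w * P w)).
  assert (Hdgp : forall w, 0 <= w < 1 -> dg w > 0).
  { intros w Hw. unfold dg.
    replace (- (P1 w * R0 w) * P w - (f 1 - f w) * (- eps * P1 w)) with (P1 w * - nk w) by (unfold nk; ring).
    apply Rmult_lt_0_compat; [apply Rmult_lt_0_compat; [apply HP1p|]|apply Rinv_0_lt_compat, Rmult_lt_0_compat; apply HPp].
    assert (nk w < 0) by (apply Hkn; exact Hw). lra. }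
  assert (HgD : forall w, I01o w -> is_derive_on I01o g w (dg w)).
  { intros w Hw. unfold is_derive_on.
    apply filterlim_ext_loc with (f := fun y => (- ((f y - f w) / (y - w)) * P w + - ((f 1 - f w) * ((P y - P w) / (y - w)))) * / (P y * P w)).
    - exists (mkposreal 1 Rlt_0_1). intros y _ [Hy Hyw]. unfold g, P.
      assert (Rpower (1 - y) eps <> 0) by (apply Rgt_not_eq, P_pos).
      assert (Rpower (1 - w) eps <> 0) by (apply Rgt_not_eq, P_pos).
      assert (y - w <> 0) by (intro; apply Hyw; lra).
      field. tauto.
    - unfold dg. apply lim_mult.
      + apply lim_plus.
        * apply lim_mult; [apply lim_opp, Hfd, Hw|apply filterlim_const].
        * apply lim_opp, lim_mult; [apply filterlim_const|]. apply L0'. apply HPD. unfold I01o in Hw; lra.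
      + apply lim_inv. { apply Rgt_not_eq, Rmult_lt_0_compat; apply HPp. }
        apply lim_mult; [|apply filterlim_const].
        eapply filterlim_filter_le_1; [apply filter_le_within|]. apply HPc. unfold I01o in Hw; lra. }
  assert (Hg0 : filterlim g (at_right 0) (locally (g 0))).
  { unfold g. change (filterlim (fun w => (f 1 + - f w) * / P w) (at_right 0) (locally ((f 1 + - f 0) * / P 0))).
    apply lim_mult; [apply lim_plus; [apply filterlim_const|apply lim_opp, Hf0]|].
    apply lim_inv; [apply Rgt_not_eq, HPp|exact HP0]. }
  assert (Hgm : forall a b, 0 <= a < b -> b < 1 -> g a < g b).
  { apply (mono g dg); [|intros x Hx; apply Hdgp; lra|exact Hg0].
    intros x Hx. apply L0; [exact Hx|]. apply HgD. unfold I01o; lra. }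
  assert (Hup : forall w, 0 <= w < 1 -> g w < R0 1 / eps).
  { intros w Hw. assert (h w < 0) by (apply Hhn; exact Hw).
    assert (E : g w - R0 1 / eps = h w / P w) by (assert (P w <> 0) by apply Rgt_not_eq, HPp; assert (eps <> 0) by lra; unfold g, h; field; tauto).
    assert (h w / P w < 0). { unfold Rdiv. assert (0 < / P w) by apply Rinv_0_lt_compat, HPp. nra. }
    lra. }
  assert (Hlow : forall w, 0 <= w < 1 -> R0 w / eps < g w).
  { intros w Hw. assert (nk w < 0) by (apply Hkn; exact Hw).
    assert (E : g w - R0 w / eps = - nk w * / (eps * P w)) by (assert (P w <> 0) by apply Rgt_not_eq, HPp; assert (eps <> 0) by lra; unfold g, nk; field; tauto).
    assert (0 < / (eps * P w)) by (apply Rinv_0_lt_compat, Rmult_lt_0_compat; [lra|apply HPp]).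
    assert (0 < - nk w * / (eps * P w)) by (apply Rmult_lt_0_compat; lra).
    lra. }
  split; [|split].
  - change (filterlim g (at_left 1) (Rbar_locally (Finite (R0 1 / eps)))).
    apply filterlim_le_le with (f := fun w => R0 w / eps) (h := fun _ => R0 1 / eps).
    + exists (mkposreal 1 Rlt_0_1). intros y Hy Hy1. assert (Hy' : Rabs (y - 1) < 1) by exact Hy.
      apply Rabs_def2 in Hy'. destruct Hy'. split; left; [apply Hlow|apply Hup]; lra.
    + change (filterlim (fun w => R0 w * / eps) (at_left 1) (locally (R0 1 * / eps))).
      apply lim_mult; [exact HR1'|apply filterlim_const].
    + apply filterlim_const.
  - intros w Hw. exists (dg w). split; [apply Hdgp; exact Hw|exact (HgD w Hw)].
  - intros w Hw. split.
    + assert (E : g 0 = f 1 - f 0) by (unfold g, P; rewrite P_1; field).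
      change (f 1 - f 0 < g w). rewrite <- E. apply Hgm; lra.
    + change (g w < R0 1 / eps). apply Hup; lra.
Qed.
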